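(* Let $E\in(-2,2)$, $k=\arccos(-E/2)\in(0,\pi)$, let $w_\sigma$ be a compactly supported real random variable on a probability space $(\Sigma,\mathbb P)$, and let $$T^{\epsilon,\delta}_\sigma=\begin{pmatrix}e^{-\imath k}&0\\0&e^{\imath k}\end{pmatrix}\exp\Big[\frac{\imath\delta+\epsilon w_\sigma}{2\sin(k)}(B_2+B_3)\Big],\qquad \epsilon,\delta\in\mathbb R.$$ If $\delta\ne0$, or if $\epsilon\ne0$ and the support of $w_\sigma$ contains more than one point, then the semigroup generated by $\mathrm{supp}(T^{\epsilon,\delta}_\sigma)$ is not relatively compact.
   Context: $B_2=\begin{pmatrix}0&\imath\\-\imath&0\end{pmatrix}$, $B_3=\begin{pmatrix}\imath&0\\0&-\imath\end{pmatrix}$. $\mathrm{supp}(T^{\epsilon,\delta}_\sigma)\subset\mathrm{SL}(2,\mathbb C)$ is the support of the distribution of the random matrix; relative compactness refers to the topology of $\mathbb C^{2\times 2}$. *)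

(* Defs.v *)
From HB Require Import structures.
From mathcomp Require Import all_boot all_order all_algebra.
From mathcomp Require Import complex.
From mathcomp Require Import all_classical all_reals all_analysis.
Import Order.TTheory GRing.Theory Num.Theory numFieldNormedType.Exports.

Set Implicit Arguments.
Unset Strict Implicit.
Unset Printing Implicit Defensive.

Local Open Scope classical_set_scope.
Local Open Scope ring_scope.
Local Open Scope complex_scope.

(* The complex numbers over a real field R, with their canonical
   (norm) topology. *)
Definition Cx (R : realType) := Num.NumField.sort (R[i]).

Definition mx2 (R : realType) := 'M[Cx R]_2.

Definition iC (R : realType) : Cx R := Complex 0 1.

Definition mexp (R : realType) (A : mx2 R) : mx2 R :=
  lim ((fun N : nat => \sum_(n < N) ((n`!)%:R)^-1 *: A ^+ n) @ \oo).

Definition B2 (R : realType) : mx2 R :=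
  \matrix_(i < 2, j < 2)
    (if (i == 0) && (j == 1) then iC R
     else if (i == 1) && (j == 0) then - iC R else 0).

Definition B3 (R : realType) : mx2 R :=
  \matrix_(i < 2, j < 2)
    (if (i == 0) && (j == 0) then iC R
     else if (i == 1) && (j == 1) then - iC R else 0).

Definition kE (R : realType) (E : R) : R := acos (- E / 2).

Definition cexpi (R : realType) (t : R) : Cx R := Complex (cos t) (sin t).

Definition Dk (R : realType) (E : R) : mx2 R :=
  \matrix_(i < 2, j < 2)
    (if i == j then (if i == 0 then cexpi (- kE E) else cexpi (kE E)) else 0).

(* T^{eps,delta} evaluated at the value x of w_sigma *)
Definition Tmat (R : realType) (E eps delta x : R) : mx2 R :=
  Dk E *m mexp ((((iC R) * (delta%:C : Cx R) + ((eps * x)%:C : Cx R))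
                  / ((2 * sin (kE E))%:C : Cx R)) *: (B2 R + B3 R)).

Definition supp_law (R : realType) (d : measure_display) (Sig : measurableType d)
  (P : probability Sig R) (X : topologicalType) (f : Sig -> X) : set X :=
  [set x | forall U : set X, open U -> U x -> (0 < P (f @^-1` U))%E].

Definition semigroup_gen (R : realType) (S : set (mx2 R)) : set (mx2 R) :=
  [set M | exists (n : nat) (s : 'I_n.+1 -> mx2 R),
      (forall i, S (s i)) /\ M = \prod_(i < n.+1) s i].

Definition relatively_compact (X : topologicalType) (A : set X) : Prop :=
  compact (closure A).

(* Main.v *)
Require Import Defs.
From HB Require Import structures.
From mathcomp Require Import all_boot all_order all_algebra.
From mathcomp Require Import complex.
From mathcomp Require Import all_classical all_reals all_analysis.
From mathcomp Require Import ring lra zify.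
From Stdlib Require Import Lia.
Import Order.TTheory GRing.Theory Num.Theory numFieldNormedType.Exports.
Set Implicit Arguments.
Unset Strict Implicit.
Local Open Scope classical_set_scope.
Local Open Scope ring_scope.

Section Aux.
Variable R : realType.
Local Notation C := (Cx R).
Local Notation M := (mx2 R).

Definition nc (z : C) : R := complex.Re `|z|.

Lemma ncE (z : C) : `|z| = ((nc z)%:C)%C.
Proof. by rewrite /nc RRe_real // normr_real. Qed.

Lemma nc_ge0 z : 0 <= nc z.
Proof. by rewrite -ler0c -ncE normr_ge0. Qed.

Lemma ncM z w : nc (z * w) = nc z * nc w.
Proof. by apply: complexI; rewrite rmorphM /= -!ncE normrM. Qed.

Lemma ncD z w : nc (z + w) <= nc z + nc w.
Proof. by rewrite -lecR rmorphD /= -!ncE ler_normD. Qed.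

Lemma ncN z : nc (- z) = nc z.
Proof. by rewrite /nc normrN. Qed.

Lemma nc0 : nc 0 = 0.
Proof. by rewrite /nc normr0. Qed.

Lemma nc1 : nc 1 = 1.
Proof. by rewrite /nc normr1. Qed.

Lemma ncR (x : R) : nc ((x%:C)%C) = `|x|.
Proof.
apply: complexI; rewrite -ncE normc_def /=.
by rewrite expr0n /= addr0 sqrtr_sqr.
Qed.

Lemma ncX z n : nc (z ^+ n) = nc z ^+ n.
Proof. elim: n => [|n IH]; first by rewrite !expr0 nc1. by rewrite !exprS ncM IH. Qed.

Lemma ncB z w : nc (z - w) <= nc z + nc w.
Proof. by rewrite -(ncN w) ncD. Qed.

Lemma nc_ltE z (e : R) : (`|z| < (e%:C)%C) = (nc z < e).
Proof. by rewrite ncE ltcR. Qed.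

Lemma ballE (A B : M) (e : C) :
  ball A e B <-> (0 < e /\ forall i j, `|A i j - B i j| < e).
Proof. by []. Qed.

Lemma ballR (A B : M) (r : R) :
  ball A ((r%:C)%C) B <-> (0 < r /\ forall i j, nc (A i j - B i j) < r).
Proof.
rewrite ballE ltcR; split=> -[r0 H]; split=> // i j; first by rewrite -nc_ltE.
by rewrite nc_ltE.
Qed.


Lemma posC {e : C} : 0 < e -> e = ((complex.Re e)%:C)%C /\ 0 < complex.Re e.
Proof. case: e => a b; rewrite ltcE /= => /andP[/eqP -> H]; by split. Qed.

Lemma nbhs_mx (A : M) (B : set M) : nbhs A B ->
  exists2 r : R, 0 < r & forall X : M, (forall i j, nc (A i j - X i j) < r) -> B X.
Proof.
move=> /nbhs_ballP [e e0 H]; have [Ee r0] := posC e0.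
exists (complex.Re e) => // X HX; apply: H; rewrite Ee; apply/ballR; by split.
Qed.

Lemma nbhs_mx_ball (A : M) (r : R) : 0 < r ->
  nbhs A (fun X : M => forall i j, nc (A i j - X i j) < r).
Proof.
move=> r0; apply/nbhs_ballP; exists ((r%:C)%C); first by rewrite /= -[0]/((0%:C)%C) ltcR.

by move=> X /ballR [].
Qed.

Lemma ord2P (i : 'I_2) : i = 0 \/ i = 1.
Proof. case: i => [[|[|//]] Hi]; [left|right]; exact: val_inj. Qed.

Definition mk (a b c d : C) : M :=
  \matrix_(i < 2, j < 2) if i == 0 then (if j == 0 then a else b)
                         else (if j == 0 then c else d).

Lemma mk00 a b c d : mk a b c d 0 0 = a. Proof. by rewrite mxE. Qed.
Lemma mk01 a b c d : mk a b c d 0 1 = b. Proof. by rewrite mxE. Qed.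
Lemma mk10 a b c d : mk a b c d 1 0 = c. Proof. by rewrite mxE. Qed.
Lemma mk11 a b c d : mk a b c d 1 1 = d. Proof. by rewrite mxE. Qed.
Definition mkE := (mk00, mk01, mk10, mk11).

Lemma mkP (A : M) : A = mk (A 0 0) (A 0 1) (A 1 0) (A 1 1).
Proof.
apply/matrixP => i j; rewrite mxE.
by case: (ord2P i) => ->; case: (ord2P j) => ->.
Qed.

Lemma mk_eq a b c d a' b' c' d' :
  a = a' -> b = b' -> c = c' -> d = d' -> mk a b c d = mk a' b' c' d'.
Proof. by move=> -> -> -> ->. Qed.

Lemma mk_mul a b c d a' b' c' d' :
  mk a b c d * mk a' b' c' d' =
  mk (a * a' + b * c') (a * b' + b * d') (c * a' + d * c') (c * b' + d * d').
Proof.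
apply/matrixP => i j; rewrite [in LHS]mxE !big_ord_recl big_ord0 !mxE /=.
by case: (ord2P i) => ->; case: (ord2P j) => -> /=; rewrite addr0.
Qed.

Lemma mk_add a b c d a' b' c' d' :
  mk a b c d + mk a' b' c' d' = mk (a + a') (b + b') (c + c') (d + d').
Proof.
apply/matrixP => i j; rewrite !mxE.
by case: (ord2P i) => ->; case: (ord2P j) => ->.
Qed.

Lemma mk_opp a b c d : - mk a b c d = mk (- a) (- b) (- c) (- d).
Proof.
apply/matrixP => i j; rewrite !mxE.
by case: (ord2P i) => ->; case: (ord2P j) => ->.
Qed.

Lemma mk_scale (z a b c d : C) : z *: mk a b c d = mk (z * a) (z * b) (z * c) (z * d).
Proof.
apply/matrixP => i j; rewrite !mxE.
by case: (ord2P i) => ->; case: (ord2P j) => ->.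
Qed.

Lemma mk1 : (1 : M) = mk 1 0 0 1.
Proof.
apply/matrixP => i j; rewrite !mxE.
by case: (ord2P i) => ->; case: (ord2P j) => ->.
Qed.

Lemma mk0 : (0 : M) = mk 0 0 0 0.
Proof.
apply/matrixP => i j; rewrite !mxE.
by case: (ord2P i) => ->; case: (ord2P j) => ->.
Qed.


Implicit Types A B : M.

Definition tr2 (A : M) := A 0 0 + A 1 1.
Definition det2 (A : M) := A 0 0 * A 1 1 - A 0 1 * A 1 0.
Definition adj2 (A : M) := mk (A 1 1) (- A 0 1) (- A 1 0) (A 0 0).
Definition nm (A : M) : R := nc (A 0 0) + nc (A 0 1) + nc (A 1 0) + nc (A 1 1).

Lemma nm_ge0 A : 0 <= nm A.
Proof. rewrite /nm; have := nc_ge0; move=> H; have := H (A 0 0); have := H (A 0 1);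
  have := H (A 1 0); have := H (A 1 1); lra. Qed.

Lemma nm_entry A i j : nc (A i j) <= nm A.
Proof.
rewrite /nm; have H := nc_ge0.
move: (H (A 0 0)) (H (A 0 1)) (H (A 1 0)) (H (A 1 1)) => *.
case: (ord2P i) => ->; case: (ord2P j) => ->; lra.
Qed.

Lemma nm_mk a b c d : nm (mk a b c d) = nc a + nc b + nc c + nc d.
Proof. by rewrite /nm !mkE. Qed.

Lemma nmD A B : nm (A + B) <= nm A + nm B.
Proof.
rewrite (mkP A) (mkP B) mk_add !nm_mk.
move: (ncD (A 0 0) (B 0 0)) (ncD (A 0 1) (B 0 1)) (ncD (A 1 0) (B 1 0)) (ncD (A 1 1) (B 1 1)).
lra.
Qed.

Lemma nmN A : nm (- A) = nm A.
Proof. by rewrite (mkP A) mk_opp !nm_mk !ncN. Qed.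

Lemma nmB A B : nm (A - B) <= nm A + nm B.
Proof. by rewrite -(nmN B) nmD. Qed.

Lemma nmZ z A : nm (z *: A) = nc z * nm A.
Proof. rewrite (mkP A) mk_scale !nm_mk !ncM; ring. Qed.

Lemma nc_mul2 a b c d : nc (a * b + c * d) <= nc a * nc b + nc c * nc d.
Proof. by rewrite -!ncM ncD. Qed.

Lemma nmM A B : nm (A * B) <= nm A * nm B.
Proof.
rewrite (mkP A) (mkP B) mk_mul !nm_mk.
set a := A 0 0; set b := A 0 1; set c := A 1 0; set d := A 1 1.
set a' := B 0 0; set b' := B 0 1; set c' := B 1 0; set d' := B 1 1.
move: (nc_mul2 a a' b c') (nc_mul2 a b' b d') (nc_mul2 c a' d c') (nc_mul2 c b' d d').
move: (nc_ge0 a) (nc_ge0 b) (nc_ge0 c) (nc_ge0 d).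
move: (nc_ge0 a') (nc_ge0 b') (nc_ge0 c') (nc_ge0 d').
set x1 := nc a; set x2 := nc b; set x3 := nc c; set x4 := nc d.
set y1 := nc a'; set y2 := nc b'; set y3 := nc c'; set y4 := nc d'.
move=> *.
have P : forall u v : R, 0 <= u -> 0 <= v -> 0 <= u * v by move=> u v; apply: mulr_ge0.
have := P x1 y2; have := P x1 y4; have := P x2 y1; have := P x2 y3;
have := P x3 y2; have := P x3 y4; have := P x4 y1; have := P x4 y3.
move=> *; nra.
Qed.

Lemma nm_adj A : nm (adj2 A) = nm A.
Proof. by rewrite /adj2 nm_mk !ncN /nm; ring. Qed.

Lemma nm_lt4 {A B : M} {r : R} : (forall i j, nc (A i j - B i j) < r) -> nm (A - B) < 4 * r.
Proof.
move=> H; rewrite /nm !mxE.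
move: (H 0 0) (H 0 1) (H 1 0) (H 1 1); lra.
Qed.

Lemma nm_le_entries (A B : M) i j : nc (A i j - B i j) <= nm (A - B).
Proof. by have := nm_entry (A - B) i j; rewrite !mxE. Qed.

Lemma det2_mk a b c d : det2 (mk a b c d) = a * d - b * c.
Proof. by rewrite /det2 !mkE. Qed.

Lemma tr2_mk a b c d : tr2 (mk a b c d) = a + d.
Proof. by rewrite /tr2 !mkE. Qed.

Lemma det2M A B : det2 (A * B) = det2 A * det2 B.
Proof. rewrite (mkP A) (mkP B) mk_mul !det2_mk; ring. Qed.

Lemma det2_1 : det2 1 = 1.
Proof. by rewrite mk1 det2_mk mulr1 mulr0 subr0. Qed.

Lemma det2X A n : det2 A = 1 -> det2 (A ^+ n) = 1.
Proof.
move=> H; elim: n => [|n IH]; first by rewrite expr0 det2_1.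
by rewrite exprS det2M H IH mulr1.
Qed.

Lemma adj2_mulr A : det2 A = 1 -> A * adj2 A = 1.
Proof.
rewrite (mkP A) det2_mk /adj2 !mkE mk_mul mk1 => H.
apply: mk_eq; first [ring | rewrite -H; ring].
Qed.

Lemma adj2_mull A : det2 A = 1 -> adj2 A * A = 1.
Proof.
rewrite (mkP A) det2_mk /adj2 !mkE mk_mul mk1 => H.
apply: mk_eq; first [ring | rewrite -H; ring].
Qed.

Lemma adj2M A B : adj2 (A * B) = adj2 B * adj2 A.
Proof.
rewrite (mkP A) (mkP B) mk_mul /adj2 !mkE mk_mul.
apply: mk_eq; ring.
Qed.

Lemma adj2_1 : adj2 1 = 1.
Proof. by rewrite mk1 /adj2 !mkE !oppr0. Qed.

Lemma adj2X A n : adj2 (A ^+ n) = adj2 A ^+ n.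
Proof.
elim: n => [|n IH]; first by rewrite !expr0 adj2_1.
by rewrite exprS adj2M IH -exprSr.
Qed.

Lemma tr2D A B : tr2 (A + B) = tr2 A + tr2 B.
Proof. rewrite /tr2 !mxE; ring. Qed.
Lemma tr2N A : tr2 (- A) = - tr2 A.
Proof. rewrite /tr2 !mxE; ring. Qed.
Lemma tr2Z z A : tr2 (z *: A) = z * tr2 A.
Proof. rewrite /tr2 !mxE; ring. Qed.
Lemma tr2_1 : tr2 1 = 2.
Proof. by rewrite mk1 tr2_mk. Qed.

Lemma CH2 A : det2 A = 1 -> A * A = tr2 A *: A - 1.
Proof.
rewrite (mkP A) det2_mk tr2_mk mk_mul mk_scale mk1 mk_opp mk_add ?mkE => H.
apply: mk_eq; first [ring | rewrite -H; ring].
Qed.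

Lemma nc_tr2 A B : nc (tr2 A - tr2 B) <= nm (A - B).
Proof.
rewrite /nm /tr2 !mxE.
have -> : A 0 0 + A 1 1 - (B 0 0 + B 1 1) = (A 0 0 - B 0 0) + (A 1 1 - B 1 1) by ring.
move: (ncD (A 0 0 - B 0 0) (A 1 1 - B 1 1)) (nc_ge0 (A 0 1 - B 0 1)) (nc_ge0 (A 1 0 - B 1 0)).
lra.
Qed.


Lemma sg_gen (G : set M) A : G A -> semigroup_gen G A.
Proof. move=> GA; exists 0%N, (fun _ => A); split => //; by rewrite big_ord1. Qed.

Lemma sg_prepend (G : set M) A B : G A -> semigroup_gen G B -> semigroup_gen G (A * B).
Proof.
move=> GA [m [t [Gt ->]]].
exists m.+1, (fun i => if unlift ord0 i is Some j then t j else A); split.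
  by move=> i; case: (unlift ord0 i).
rewrite [RHS]big_ord_recl unlift_none; congr (_ * _); apply: eq_bigr => i _; by rewrite liftK.
Qed.

Lemma sg_mul (G : set M) A B : semigroup_gen G A -> semigroup_gen G B ->
  semigroup_gen G (A * B).
Proof.
move=> [n [s [Gs ->]]]; elim: n s Gs => [|n IH] s Gs SB.
  by rewrite big_ord1; apply: sg_prepend.
rewrite big_ord_recl -mulrA; apply: sg_prepend => //.
by apply: IH => // i.
Qed.

Lemma sg_pow (G : set M) A n : semigroup_gen G A -> semigroup_gen G (A ^+ n.+1).
Proof.
move=> SA; elim: n => [|n IH]; first by rewrite expr1.
by rewrite exprS; apply: sg_mul.
Qed.

Lemma cluster_seq {K : set M} {u : nat -> M} : compact K -> (forall n, K (u n)) ->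
  exists L : M, forall r : R, 0 < r -> forall N, exists2 n, (N <= n)%N &
    forall i j, nc (L i j - u n i j) < r.
Proof.
move=> cK Ku.
have [L [_ cL]] : K `&` cluster (u @ \oo) !=set0.
  apply: cK; rewrite fmapE; exists 0%N => // n _; exact: Ku.
exists L => r r0 N.
have [X [[n Nn <-] HX]] : [set X | exists2 n, (N <= n)%N & u n = X] `&`
    (fun X : M => forall i j, nc (L i j - X i j) < r) !=set0.
  apply: cL; last exact: nbhs_mx_ball.
  rewrite fmapE; exists N => // m /= Nm; by exists m.
by exists n.
Qed.

Lemma closureP (S : set M) X : closure S X <->
  (forall r : R, 0 < r -> exists2 s, S s & forall i j, nc (X i j - s i j) < r).
Proof.
split.
  move=> cX r r0; have [s [Ss Hs]] := cX _ (nbhs_mx_ball X r0).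
  by exists s.
move=> H B /nbhs_mx [r r0 HB]; have [s Ss Hs] := H r r0.
by exists s; split => //; apply: HB.
Qed.

Lemma small_delta {a r : R} : 0 <= a -> 0 < r ->
  exists2 d : R, 0 < d & d <= 1 /\ d * (a + 1) < r.
Proof.
move=> a0 r0; exists (r / (a + r + 1)).
  by apply: divr_gt0 => //; lra.
have H : r / (a + r + 1) * (a + r + 1) = r by field; lra.
have : 0 < r / (a + r + 1) by apply: divr_gt0 => //; lra.
move: H; set d := r / (a + r + 1) => *; split; nra.
Qed.

Lemma closure_mul (S : set M) X Y :
  (forall A B, S A -> S B -> S (A * B)) ->
  closure S X -> closure S Y -> closure S (X * Y).
Proof.
move=> Smul /closureP cX /closureP cY; apply/closureP => r r0.
have [d d0 [d1 dr]] := small_delta (addr_ge0 (nm_ge0 X) (nm_ge0 Y)) r0.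
have d4 : 0 < d / 4 by apply: divr_gt0.
have [s Ss Hs] := cX _ d4; have [t St Ht] := cY _ d4.
exists (s * t); first exact: Smul.
move=> i j; apply: le_lt_trans (nm_le_entries _ _ i j) _.
have e1 := nm_lt4 Hs; have e2 := nm_lt4 Ht.
have -> : X * Y - s * t = (X - s) * Y + s * (Y - t).
  by rewrite mulrBl mulrBr addrA subrK.
apply: le_lt_trans (nmD _ _) _.
have h1 := nmM (X - s) Y; have h2 := nmM s (Y - t).
have h3 : nm s <= nm X + nm (X - s).
  have := nmB X (X - s); rewrite (_ : X - (X - s) = s) //.
  by rewrite opprB addrC subrK.
move: (nm_ge0 X) (nm_ge0 Y) (nm_ge0 s) (nm_ge0 (X - s)) (nm_ge0 (Y - t)).
move: e1 e2; rewrite (_ : 4 * (d / 4) = d); last by field.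
move=> *; nra.
Qed.


Lemma mexp_nil (A : M) : A * A = 0 -> mexp A = 1 + A.
Proof.
move=> AA; rewrite /mexp; apply: norm_lim_near_cst; exists 2%N => // n /= Hn.
case: n Hn => [|[|m]] // _.
rewrite !big_ord_recl /= big1 ?addr0.
  by rewrite expr0 expr1 /= !invr1 !scale1r.
move=> i _; rewrite /bump /=.
by rewrite !exprS mulrA AA !mul0r scaler0.
Qed.

Let i0 := iC R.

Lemma NE : B2 R + B3 R = mk i0 i0 (- i0) (- i0).
Proof.
apply/matrixP => i j; rewrite !mxE.
by case: (ord2P i) => ->; case: (ord2P j) => -> /=; rewrite ?addr0 ?add0r.
Qed.

Lemma DkE E : Dk E = mk (cexpi (- kE E)) 0 0 (cexpi (kE E)).
Proof.
apply/matrixP => i j; rewrite !mxE.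
by case: (ord2P i) => ->; case: (ord2P j) => -> /=.
Qed.


Lemma mk_mulmx a b c d a' b' c' d' :
  mk a b c d *m mk a' b' c' d' =
  mk (a * a' + b * c') (a * b' + b * d') (c * a' + d * c') (c * b' + d * d').
Proof. exact: mk_mul. Qed.

Definition cf (E eps delta x : R) : C :=
  (i0 * (delta%:C)%C + ((eps * x)%:C)%C) / ((2 * sin (kE E))%:C)%C.

Lemma TmatE E eps delta x : let c := cf E eps delta x in
  let al := cexpi (- kE E) in let be := cexpi (kE E) in
  Tmat E eps delta x =
  mk (al * (1 + c * i0)) (al * (c * i0)) (- (be * (c * i0))) (be * (1 - c * i0)).
Proof.
move=> c al be.
rewrite /Tmat NE mk_scale mexp_nil; last first.
  by rewrite mk_mul mk0; apply: mk_eq; ring.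
rewrite mk1 mk_add DkE mk_mulmx -/al -/be -/c.
apply: mk_eq; rewrite /c /cf /i0; ring.
Qed.


Lemma i0i0 : i0 * i0 = -1.
Proof. by rewrite /i0 /iC -expr2 sqr_i. Qed.

Lemma cexpiE (t : R) : cexpi t = ((cos t)%:C)%C + i0 * ((sin t)%:C)%C.
Proof. by rewrite {1}[cexpi t]complexE. Qed.

Lemma kfacts (E : R) : -2 < E < 2 -> cos (kE E) = - E / 2 /\ 0 < sin (kE E).
Proof.
move=> /andP[E1 E2].
have H : -1 <= - E / 2 <= 1 by apply/andP; split; lra.
split; first by have [_ ->] := acos_def H.
rewrite /kE sin_acos // sqrtr_gt0.
have -> : 1 - (- E / 2) ^+ 2 = (4 - E * E) / 4 by field.
apply: divr_gt0; last by [].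
nra.
Qed.

Lemma albe (E : R) : cexpi (- kE E) * cexpi (kE E) = 1.
Proof.
rewrite !cexpiE cosN sinN.
set c := cos (kE E); set s := sin (kE E).
have H : c ^+ 2 + s ^+ 2 = 1 by rewrite cos2Dsin2.
have -> : ((c%:C)%C + i0 * ((- s)%:C)%C) * ((c%:C)%C + i0 * ((s%:C)%C)) =
   ((c ^+ 2 + s ^+ 2)%:C)%C - (i0 * i0 + 1) * ((s ^+ 2)%:C)%C.
  by rewrite !rmorphD !rmorphN !rmorphXn /=; ring.
by rewrite H i0i0 addNr mul0r subr0.
Qed.

Lemma det2T (E eps delta x : R) : det2 (Tmat E eps delta x) = 1.
Proof.
rewrite TmatE det2_mk -[RHS](albe E).
set al := cexpi (- kE E); set be := cexpi (kE E); set c := cf E eps delta x.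
ring.
Qed.

Lemma tr2T (E eps delta x : R) : -2 < E < 2 ->
  tr2 (Tmat E eps delta x) = (((- E + eps * x)%:C)%C + i0 * (delta%:C)%C).
Proof.
move=> hE; have [ck sk] := kfacts hE.
rewrite TmatE tr2_mk /cf !cexpiE cosN sinN ck.
have s0 : ((sin (kE E))%:C)%C != 0 :> C.
  by apply/eqP => /complexI /eqP; rewrite gt_eqF.
set s := sin (kE E).
set K := (i0 * (delta%:C)%C + ((eps * x)%:C)%C).
apply/eqP; rewrite -subr_eq0; apply/eqP.
transitivity (- ((i0 * i0 + 1) * K)); last by rewrite i0i0 addNr mul0r oppr0.
rewrite /K !(rmorphN, rmorphM, rmorphD, fmorphV, rmorph_nat) /=.
field; exact: s0.
Qed.


Lemma arch (y : R) : exists N : nat, y < N%:R.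
Proof.
exists (Num.Def.archi_bound y).
exact: le_lt_trans (ler_norm y) (unstable.ltr_norm_bound y).
Qed.

Lemma nc_gt0 {z : C} : z != 0 -> 0 < nc z.
Proof.
move=> z0; rewrite lt_neqAle nc_ge0 andbT; apply/eqP => H.
move/eqP: z0; apply; apply/normr0_eq0; by rewrite ncE -H.
Qed.

Lemma bernoulli {q : R} n : 1 <= q -> 1 + n%:R * (q - 1) <= q ^+ n.
Proof.
move=> q1; elim: n => [|n IH]; first by rewrite expr0 mul0r addr0.
rewrite exprS -natr1.
have : 1 <= q ^+ n by rewrite exprn_ege1.
move: IH; set y := q ^+ n; move=> *; nra.
Qed.

Lemma eigen {t : C} : complex.Im t != 0 ->
  exists l m : C, [/\ l * m = 1, l + m = t & 1 < nc l].
Proof.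
move=> It.
pose s := sqrtc (t ^+ 2 - 4).
have ss : s ^+ 2 = t ^+ 2 - 4 by rewrite sqr_sqrtc.
pose l0 := (t + s) / 2; pose m0 := (t - s) / 2.
have lm : l0 * m0 = 1.
  rewrite /l0 /m0.
  have -> : (t + s) / 2 * ((t - s) / 2) = (t ^+ 2 - s ^+ 2) / 4 by field.
  by rewrite ss; field.
have st : l0 + m0 = t by rewrite /l0 /m0; field.
have nlm : nc l0 * nc m0 = 1 by rewrite -ncM lm nc1.
have [H|H] : nc l0 < 1 \/ 1 < nc l0.
  have [H|H|H] := ltrgtP (nc l0) 1; [by left|by right|].
  exfalso; move/negP: It; apply; apply/eqP.
  have l00 : l0 != 0 by apply/eqP => l00; move: lm; rewrite l00 mul0r => /eqP; rewrite eq_sym oner_eq0.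
  have cj : l0 * (l0^*)%C = 1 by rewrite -sqr_normc ncE H expr1n.
  have mc : m0 = (l0^*)%C.
    by apply: (mulfI l00); rewrite lm cj.
  rewrite -st mc addcJ.
  by rewrite -(rmorph_nat (real_complex R)) -rmorphM.
- exists m0, l0; split => //; first by rewrite mulrC.
  + by rewrite addrC.
  + move: (nc_ge0 l0) (nc_ge0 m0) => *; nra.
- by exists l0, m0.
Qed.


Lemma arch2 (y : R) {c : R} : 0 < c -> exists N : nat, y < N%:R * c.
Proof.
move=> c0; have [N HN] := arch (y / c); exists N.
have e : y / c * c = y by field; lra.
move: e HN; set z := y / c => *; nra.
Qed.

Lemma trpow {A : M} {l m : C} : det2 A = 1 -> l * m = 1 -> l + m = tr2 A ->
  forall n, tr2 (A ^+ n) = l ^+ n + m ^+ n.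
Proof.
move=> dA lm lmt.
suff H : forall n, tr2 (A ^+ n) = l ^+ n + m ^+ n /\
                   tr2 (A ^+ n.+1) = l ^+ n.+1 + m ^+ n.+1 by move=> n; case: (H n).
elim => [|n [IH1 IH2]].
  by rewrite !expr0 !expr1 tr2_1 -lmt.
split => //.
have -> : A ^+ n.+2 = tr2 A *: A ^+ n.+1 - A ^+ n.
  by rewrite [LHS]exprSr [in LHS]exprSr -mulrA CH2 // mulrBr mulr1 -scalerAr -exprSr.
rewrite tr2D tr2N tr2Z IH1 IH2 -lmt.
have -> : (l + m) * (l ^+ n.+1 + m ^+ n.+1) - (l ^+ n + m ^+ n) =
   l ^+ n.+2 + m ^+ n.+2 + (l * m - 1) * (l ^+ n + m ^+ n).
  rewrite !exprS; set ln := l ^+ n; set mn := m ^+ n; ring.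
by rewrite lm subrr mul0r addr0.
Qed.

Lemma noncompact_pow (K : set M) (A : M) : compact K -> det2 A = 1 ->
  complex.Im (tr2 A) != 0 -> (forall n, K (A ^+ n.+1)) -> False.
Proof.
move=> cK dA It HK.
have [l [m [lm lmt l1]]] := eigen It.
have nlm : nc l * nc m = 1 by rewrite -ncM lm nc1.
have m1 : nc m <= 1 by move: (nc_ge0 m) => *; nra.
have [L HL] := cluster_seq cK HK.
set B := nc (tr2 L) + 4.
have q1 : 0 < nc l - 1 by lra.
have [N HN] := arch2 B q1.
have [n Nn Hn] := HL 1 ltr01 N.
have h1 := nm_lt4 Hn; have h2 := nc_tr2 L (A ^+ n.+1).
have h3 := ncB (tr2 L) (tr2 L - tr2 (A ^+ n.+1)).
rewrite (_ : tr2 L - (tr2 L - tr2 (A ^+ n.+1)) = tr2 (A ^+ n.+1)) in h3; last first.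
  by rewrite opprB addrC subrK.
rewrite (trpow dA lm lmt) in h2 h3.
have h4 := ncB (l ^+ n.+1 + m ^+ n.+1) (m ^+ n.+1).
rewrite addrK !ncX in h4.
have h5 : nc m ^+ n.+1 <= 1 by rewrite exprn_ile1 ?nc_ge0.
have h6 := bernoulli n.+1 (ltW l1).
have h7 : (N%:R : R) <= n.+1%:R by rewrite ler_nat; apply: leq_trans Nn _.
have h8 : N%:R * (nc l - 1) <= n.+1%:R * (nc l - 1) by rewrite ler_wpM2r // ltW.
move: h1 h2 h3 h4 h5 h6 h8 HN; rewrite /B mulr1; lra.
Qed.


Lemma adjpow (T : M) m : det2 T = 1 -> adj2 T ^+ m * T ^+ m = 1.
Proof.
move=> dT; elim: m => [|m IH]; first by rewrite !expr0 mulr1.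
by rewrite exprSr exprS -mulrA (mulrA (adj2 T)) adj2_mull // mul1r IH.
Qed.

Lemma inv_closure (S : set M) (T : M) : compact (closure S) -> det2 T = 1 ->
  (forall n, S (T ^+ n.+1)) -> closure S (adj2 T).
Proof.
move=> cK dT HS.
have HK : forall n, closure S (T ^+ n.+1) by move=> n; apply: subset_closure.
have [L HL] := cluster_seq cK HK.
set Ti := adj2 T.
have a0 : 0 <= 2 * nm Ti * (nm L + 1).
  by apply: mulr_ge0; [apply: mulr_ge0 => //; apply: nm_ge0|move: (nm_ge0 L) => *; lra].
apply/closureP => r r0.
have [d d0 [d1 dr]] := small_delta a0 r0.
have e0 : 0 < d / 4 by apply: divr_gt0.
have [n1 _ H1] := HL _ e0 0%N.
have [n2 N2 H2] := HL _ e0 n1.+2.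
set j := (n2 - n1.+2)%N.
have n2E : n2.+1 = (n1.+1 + j.+2)%N by rewrite /j; lia.
exists (T ^+ j.+1); first exact: HS.
have key : T ^+ j.+1 - Ti = Ti * adj2 (T ^+ n1.+1) * (T ^+ n2.+1 - T ^+ n1.+1).
  rewrite adj2X -/Ti n2E exprD mulrBr -!mulrA (mulrA (Ti ^+ n1.+1)) adjpow //.
  rewrite mul1r mulr1 (exprS T j.+1) mulrA adj2_mull // mul1r.
  done.
move=> i k; apply: le_lt_trans (nm_le_entries _ _ i k) _.
rewrite -nmN opprB key.
have g1 := nm_lt4 H1; have g2 := nm_lt4 H2.
rewrite (_ : 4 * (d / 4) = d) in g1 g2; last by field.
have g3 := nmM (Ti * adj2 (T ^+ n1.+1)) (T ^+ n2.+1 - T ^+ n1.+1).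
have g4 := nmM Ti (adj2 (T ^+ n1.+1)).
rewrite nm_adj in g4.
have g5 : nm (T ^+ n2.+1 - T ^+ n1.+1) <= nm (L - T ^+ n1.+1) + nm (L - T ^+ n2.+1).
  have := nmB (L - T ^+ n1.+1) (L - T ^+ n2.+1).
  by rewrite (_ : L - T ^+ n1.+1 - (L - T ^+ n2.+1) = T ^+ n2.+1 - T ^+ n1.+1) //; 
     rewrite opprB addrC addrA subrK.
have g6 : nm (T ^+ n1.+1) <= nm L + nm (L - T ^+ n1.+1).
  have := nmB L (L - T ^+ n1.+1).
  by rewrite (_ : L - (L - T ^+ n1.+1) = T ^+ n1.+1) // opprB addrC subrK.
have g7 : nm (T ^+ n1.+1) <= nm L + 1 by lra.
have g8 : nm (Ti * adj2 (T ^+ n1.+1)) <= nm Ti * (nm L + 1).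
  apply: le_trans g4 _; apply: ler_wpM2l => //; exact: nm_ge0.
have g9 : nm (T ^+ n2.+1 - T ^+ n1.+1) <= 2 * d by lra.
apply: le_lt_trans g3 _.
apply: le_lt_trans (_ : _ <= nm Ti * (nm L + 1) * (2 * d)) _.
  apply: ler_pM => //; exact: nm_ge0.
move: dr (nm_ge0 Ti) (nm_ge0 L) => *; nra.
Qed.


Lemma ncn (n : nat) : nc (n%:R) = n%:R.
Proof. by rewrite -(rmorph_nat (real_complex R)) ncR normr_nat. Qed.

Lemma noncompact_unip (K : set M) (V : nat -> M) (z : C) : compact K -> z != 0 ->
  (forall q, V q 0 1 = q.+1%:R * z) -> (forall q, K (V q)) -> False.
Proof.
move=> cK z0 HV HK.
have [L HL] := cluster_seq cK HK.
have [n1 _ H1] := HL 1 ltr01 0%N.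
have [m Hm] := arch2 2 (nc_gt0 z0).
have [n2 N2 H2] := HL 1 ltr01 (n1 + m)%N.
have h := ncB (L 0 1 - V n1 0 1) (L 0 1 - V n2 0 1).
rewrite (_ : L 0 1 - V n1 0 1 - (L 0 1 - V n2 0 1) = V n2 0 1 - V n1 0 1) in h; last first.
  by rewrite opprB addrC addrA subrK.
rewrite !HV -mulrBl -natrB // in h; last by lia.
rewrite ncM ncn in h.
have hm : (m%:R : R) <= (n2.+1 - n1.+1)%N%:R by rewrite ler_nat subSS leq_subRL ?leq_addl //;
  apply: leq_trans (leq_addr _ _) N2.
have hm2 : m%:R * nc z <= (n2.+1 - n1.+1)%N%:R * nc z by rewrite ler_wpM2r // nc_ge0.
move: (H1 0 1) (H2 0 1); rewrite !HV => *; lra.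
Qed.

Lemma unip_mul (W : M) (a b : C) : W * W = 0 ->
  (1 + a *: W) * (1 + b *: W) = 1 + (a + b) *: W.
Proof.
move=> WW.
rewrite mulrDl !mulrDr !mul1r mulr1 -scalerAl -scalerAr scalerA WW scaler0 addr0.
by rewrite scalerDl addrA [1 + _ + _]addrAC.
Qed.

Lemma unip_pow (W : M) (d : C) q : W * W = 0 ->
  (1 + d *: W) ^+ q = 1 + (q%:R * d) *: W.
Proof.
move=> WW; elim: q => [|q IH]; first by rewrite expr0 mul0r scale0r addr0.
by rewrite exprSr IH unip_mul // -natr1 mulrDl mul1r.
Qed.


Definition Wm (E : R) : M :=
  mk i0 (cexpi (- kE E) ^+ 2 * i0) (- (cexpi (kE E) ^+ 2 * i0)) (- i0).

Lemma al0 (E : R) : cexpi (- kE E) != 0.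
Proof.
apply/eqP => H; have := albe E; rewrite H mul0r => /eqP; by rewrite eq_sym oner_eq0.
Qed.

Lemma beE (E : R) : cexpi (kE E) = (cexpi (- kE E))^-1.
Proof.
apply: (mulfI (al0 E)); by rewrite albe mulfV // al0.
Qed.

Lemma WW (E : R) : Wm E * Wm E = 0.
Proof.
rewrite /Wm mk_mul mk0 beE; have := al0 E; set al := cexpi _ => a0.
apply: mk_eq; field => //.
Qed.

Lemma i0_neq0 : i0 != 0.
Proof. by apply/eqP => H; have := i0i0; rewrite H mul0r => /eqP; rewrite eq_sym oppr_eq0 oner_eq0. Qed.

Lemma W01 (E : R) : Wm E 0 1 != 0.
Proof. by rewrite /Wm mkE mulf_neq0 ?expf_neq0 ?al0 ?i0_neq0. Qed.

Lemma Uform (E eps delta x y : R) :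
  Tmat E eps delta x * adj2 (Tmat E eps delta y) =
  1 + (cf E eps delta x - cf E eps delta y) *: Wm E.
Proof.
rewrite !TmatE /adj2 !mkE mk_mul /Wm mk_scale mk1 mk_add beE.
have := al0 E; set al := cexpi _ => a0.
set a := cf E eps delta x; set b := cf E eps delta y.
apply: mk_eq; field => //.
Qed.

Lemma cf_diff (E eps delta x y : R) : -2 < E < 2 -> eps != 0 -> x <> y ->
  cf E eps delta x - cf E eps delta y != 0.
Proof.
move=> hE e0 xy; have [_ sk] := kfacts hE.
rewrite /cf -mulrBl mulf_neq0 //; last first.
  by rewrite invr_eq0; apply/eqP => /complexI/eqP; rewrite mulf_eq0 pnatr_eq0 /= gt_eqF.
rewrite opprD addrACA subrr add0r -rmorphB /=.
apply/eqP => /complexI/eqP; rewrite -mulrBr mulf_eq0 (negbTE e0) /= subr_eq0.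
by move=> /eqP.
Qed.

End Aux.

Unset Implicit Arguments.
Set Strict Implicit.
Local Open Scope classical_set_scope.
Local Open Scope ring_scope.

Section Aux2.
Variable R : realType.
Local Notation C := (Cx R).
Local Notation M := (mx2 R).
Let i0 := iC R.

Definition Qm (E : R) : M :=
  mk (cexpi (- kE E) * i0) (cexpi (- kE E) * i0) (- (cexpi (kE E) * i0)) (- (cexpi (kE E) * i0)).

Lemma Tdiff (E eps delta y z : R) :
  Tmat E eps delta y - Tmat E eps delta z = (cf E eps delta y - cf E eps delta z) *: Qm E.
Proof.
rewrite !TmatE mk_opp mk_add /Qm mk_scale; apply: mk_eq; rewrite /i0; ring.
Qed.


Lemma mxBE (A B : M) i j : (A - B) i j = A i j - B i j.
Proof. by rewrite !mxE. Qed.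

Lemma mxZE (z : C) (A : M) i j : (z *: A) i j = z * A i j.
Proof. by rewrite !mxE. Qed.

Lemma cfB (E eps delta y z : R) :
  cf E eps delta y - cf E eps delta z = ((eps * (y - z))%:C)%C / ((2 * sin (kE E))%:C)%C.
Proof.
rewrite /cf -mulrBl opprD addrACA subrr add0r -rmorphB /=; congr (_ * _).
by rewrite mulrBr.
Qed.

Lemma Tmat_open (E eps delta : R) (U : set M) : open U ->
  open (fun y : R => U (Tmat E eps delta y)).
Proof.
move=> Uo; rewrite openE => y Uy.
have /nbhs_mx [r r0 Hr] : nbhs (Tmat E eps delta y) U by apply: Uo.
set c0 := nc ((((2 * sin (kE E))%:C)%C)^-1).
set a := `|eps| * c0 * nm (Qm E) + 1.
have a0 : 0 < a.
  rewrite /a; have : 0 <= `|eps| * c0 * nm (Qm E).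
    by apply: mulr_ge0; [apply: mulr_ge0; [exact: normr_ge0|exact: nc_ge0]|exact: nm_ge0].
  lra.
apply/nbhs_ballP; exists (r / a); first by apply: divr_gt0.
move=> z /= Hz; apply: Hr => i j.
rewrite -mxBE Tdiff cfB mxZE ncM ncM ncR normrM -/c0.
have h1 := nm_entry (Qm E) i j.
have h2 : `|y - z| < r / a by move: Hz; rewrite /ball /=.
have h3 : r / a * a = r by field; lra.
have h4 : `|y - z| * a < r.
  by rewrite -h3 ltr_pM2r.
have h5 : `|eps| * `|y - z| * c0 * nc (Qm E i j) <= `|y - z| * (`|eps| * c0 * nm (Qm E)).
  rewrite (mulrC `|eps|) -!mulrA; apply: ler_wpM2l => //; apply: ler_wpM2l => //.
  apply: ler_wpM2l; first exact: nc_ge0. exact: h1.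
move: h4 h5; rewrite /a mulrDr mulr1 => h4 h5.
have : 0 <= `|y - z| by [].
lra.
Qed.

Lemma suppT_of (d : measure_display) (Sig : measurableType d) (P : probability Sig R)
  (w : Sig -> R) (E eps delta x : R) :
  supp_law P w x ->
  supp_law P (fun s => Tmat E eps delta (w s)) (Tmat E eps delta x).
Proof.
move=> Hx U Uo Ux; exact: (Hx _ (Tmat_open E eps delta U Uo) Ux).
Qed.

Lemma meas_pre (d : measure_display) (Sig : measurableType d) (w : Sig -> R)
  (A : set R) : measurable_fun setT w -> measurable A -> measurable (w @^-1` A).
Proof. by move=> mw mA; rewrite -[_ @^-1` _]setTI; apply: mw. Qed.

Lemma supp_nonempty (d : measure_display) (Sig : measurableType d) (P : probability Sig R)
  (w : Sig -> R) : measurable_fun setT w -> exists x, supp_law P w x.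
Proof.
move=> mw; apply: contrapT => Hn.
have H0 : forall x : R, exists U : set R, [/\ open U, U x & P (w @^-1` U) = 0%E].
  move=> x; apply: contrapT => Hx; apply: Hn; exists x => U Uo Ux.
  rewrite lt_neqAle measure_ge0 andbT; apply/negP => /eqP H.
  by apply: Hx; exists U; split.
have [f Hf] := choice H0.
have cov : forall n : nat, P (w @^-1` `[- n%:R, n%:R]%classic) = 0%E.
  move=> n.
  have : finite_subset_cover setT f `[- (n%:R : R), n%:R]%classic.
    have := @segment_compact R (- n%:R) n%:R; rewrite compact_cover; apply.
      by move=> i _; have [] := Hf i.
    by move=> x _; exists x => //; have [] := Hf x.
  move=> [D' _ HD'].
  apply/eqP; rewrite eq_le measure_ge0 andbT.
  have -> : (0 = \big[+%E/0%R]_(0 <= k <oo) P (w @^-1` f (nth (0%R : R) (finmap.enum_fset D') k)))%E.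
    by rewrite eseries0 // => k _ _; have [] := Hf (nth (0%R : R) (finmap.enum_fset D') k).
  apply: measure_sigma_subadditive_tail.
  - move=> k; apply: meas_pre => //; apply: measurable_realfun.open_measurable.
    by have [] := Hf (nth (0%R : R) (finmap.enum_fset D') k).
  - by apply: meas_pre => //; apply: measurable_itv.
  - move=> s /= /HD' [i /= iD fi]; exists (index i (finmap.enum_fset D')) => //.
    by rewrite nth_index.
have : (P setT <= \big[+%E/0%R]_(0 <= k <oo) P (w @^-1` `[(- (k%:R : R))%R, (k%:R : R)%R]%classic))%E.
  apply: measure_sigma_subadditive_tail => //.
  - by move=> k; apply: meas_pre => //; apply: measurable_itv.
  - move=> s _; have [N HN] := arch (`|w s|); exists N => //=.
    rewrite in_itv /=; rewrite -ler_norml; exact: ltW.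
rewrite eseries0 // probability_setT lee_fin.
by rewrite ler10.
Qed.

End Aux2.

Theorem proposition6 (R : realType) (E : R) (d : measure_display)
  (Sig : measurableType d) (P : probability Sig R) (w : Sig -> R)
  (eps delta : R) :
  -2 < E < 2 ->
  measurable_fun setT w ->
  compact (supp_law P w) ->
  (delta != 0 \/
   (eps != 0 /\ exists x y : R, x <> y /\ supp_law P w x /\ supp_law P w y)) ->
  ~ relatively_compact
      (semigroup_gen (supp_law P (fun s => Tmat E eps delta (w s)))).
Proof.
move=> hE mw _ H Hrc; rewrite /relatively_compact in Hrc.
set G := supp_law P (fun s => Tmat E eps delta (w s)) in Hrc.
set S := semigroup_gen G in Hrc.
have SG : forall x, supp_law P w x -> S (Tmat E eps delta x).
  by move=> x sx; apply: sg_gen; apply: suppT_of.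
case: H => [d0 | [e0 [x [y [xy [sx sy]]]]]].
  have [x sx] := supp_nonempty _ _ _ P w mw.
  apply: (noncompact_pow (A := Tmat E eps delta x) Hrc).
  - exact: det2T.
  - rewrite tr2T //=; apply: contra d0 => /eqP H; apply/eqP; rewrite -H; ring.
  - by move=> n; apply: subset_closure; apply: sg_pow; apply: SG.
set Mx := Tmat E eps delta x; set My := Tmat E eps delta y.
have cI : closure S (adj2 My).
  apply: inv_closure Hrc (det2T _ _ _ _) _ => n; apply: sg_pow; exact: SG.
have smul : forall A B, S A -> S B -> S (A * B) by move=> A B; apply: sg_mul.
have cU : closure S (Mx * adj2 My).
  by apply: closure_mul smul (subset_closure (SG _ sx)) cI.
have cUp : forall q, closure S ((Mx * adj2 My) ^+ q.+1).
  elim => [|q IH]; first by rewrite expr1.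
  by rewrite exprS; apply: closure_mul.
apply: (noncompact_unip (V := fun q => (Mx * adj2 My) ^+ q.+1)
          (z := (cf E eps delta x - cf E eps delta y) * Wm E 0 1) Hrc).
- by rewrite mulf_neq0 ?W01 // cf_diff.
- move=> q; rewrite /Mx /My Uform unip_pow ?WW // /Wm mk1 mk_scale mk_add !mkE add0r.
  ring.
- exact: cUp.
Qed.
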